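(* Let $n\ge1$, $\eta>0$, $C\in\mathbb{R}_+^{n\times n}$, $q'\in\Delta_n$ and $p'\in\Delta_n$ with all entries positive. For $i=1,\dots,n$ define $\phi_i:\mathbb{R}^n\to\mathbb{R}$ by $$\phi_i(\lambda)=np_i'\Big[-\langle q',\lambda\rangle-\eta\log p_i'+\eta\log\Big(\sum_{j=1}^n\exp((\lambda_j-C_{i,j}-\eta)/\eta)\Big)+\eta\Big].$$ Then $\phi_i$ is $\frac{np_i'}{\eta}$-smooth w.r.t. $\|\cdot\|_2$ and $\frac{5np_i'}{\eta}$-smooth w.r.t. $\|\cdot\|_\infty$.
   Context: $\Delta_n=\{a\in\mathbb{R}_+^n: a^T\mathbf 1=1\}$. A convex differentiable function $g$ is $\beta$-smooth w.r.t. a norm $\|\cdot\|_H$ if $\|\nabla g(x)-\nabla g(y)\|_{H,*}\le\beta\|x-y\|_H$ for all $x,y$, where $\|u\|_{H,*}=\max\{\langle u,v\rangle:\|v\|_H\le1\}$ (so the dual norm of $\|\cdot\|_\infty$ is $\|\cdot\|_1$). *)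

(* Defs.v *)
From HB Require Import structures.
From mathcomp Require Import all_boot all_order all_algebra.
From mathcomp Require Import all_classical all_reals all_analysis.
Set Implicit Arguments. Unset Strict Implicit. Unset Printing Implicit Defensive.
Import Order.TTheory GRing.Theory Num.Theory.
Import numFieldNormedType.Exports.
Local Open Scope classical_set_scope.
Local Open Scope ring_scope.

Definition dotv (R : realType) (n : nat) (u v : 'rV[R]_n) : R :=
  \sum_(j < n) u 0 j * v 0 j.

Definition norm2 (R : realType) (n : nat) (x : 'rV[R]_n) : R :=
  Num.sqrt (\sum_(j < n) x 0 j ^+ 2).

Definition norminf (R : realType) (n : nat) (x : 'rV[R]_n) : R :=
  \big[Num.max/0]_(j < n) `|x 0 j|.

Definition dual_norm (R : realType) (n : nat) (N : 'rV[R]_n -> R)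
    (u : 'rV[R]_n) : R :=
  sup [set dotv u v | v in [set v | N v <= 1]].

Definition grad (R : realType) (n : nat) (g : 'rV[R]_n -> R) (x : 'rV[R]_n)
    : 'rV[R]_n :=
  \row_(j < n) 'D_(delta_mx 0 j) g x.

Definition convex_fun (R : realType) (n : nat) (g : 'rV[R]_n -> R) : Prop :=
  forall (x y : 'rV[R]_n) (t : R), 0 <= t -> t <= 1 ->
    g (t *: x + (1 - t) *: y) <= t * g x + (1 - t) * g y.

Definition smooth_wrt (R : realType) (n : nat) (N : 'rV[R]_n -> R) (beta : R)
    (g : 'rV[R]_n -> R) : Prop :=
  [/\ convex_fun g,
      (forall x, differentiable g x) &
      (forall x y, dual_norm N (grad g x - grad g y) <= beta * N (x - y))].

Definition in_simplex (R : realType) (n : nat) (a : 'rV[R]_n) : Prop :=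
  (forall j, 0 <= a 0 j) /\ \sum_(j < n) a 0 j = 1.

Definition phi (R : realType) (n : nat) (eta : R) (C : 'M[R]_n)
    (q p : 'rV[R]_n) (i : 'I_n) (lam : 'rV[R]_n) : R :=
  n%:R * p 0 i *
    (- dotv q lam - eta * ln (p 0 i)
     + eta * ln (\sum_(j < n) expR ((lam 0 j - C i j - eta) / eta))
     + eta).

(* Main.v *)
Require Import Defs.
From HB Require Import structures.
From mathcomp Require Import all_boot all_order all_algebra.
From mathcomp Require Import all_classical all_reals all_analysis.
From mathcomp Require Import ring lra.
Import Order.TTheory GRing.Theory Num.Theory.
Import numFieldNormedType.Exports.
Local Open Scope classical_set_scope.
Local Open Scope ring_scope.

Section S.
Context {R : realType}.

Lemma line_eq n (f : 'rV[R]_n -> R) a v :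
  (fun h : R => h^-1 *: ((f \o shift a) (h *: v) - f a)) =
  (fun h : R => h^-1 *: (((fun t : R => f (t *: v + a)) \o shift 0) (h *: 1)
     - (fun t : R => f (t *: v + a)) 0)).
Proof.
apply: funext => h /=; rewrite /shift /= addr0 scale0r add0r.
by rewrite [h *: 1]mulr1.
Qed.

Lemma is_derive_line n (f : 'rV[R]_n -> R) (a v : 'rV[R]_n) (d : R) :
  is_derive (0:R) (1:R) (fun t : R => f (t *: v + a)) d -> is_derive a v f d.
Proof.
case=> H1 H2; split; first by rewrite /derivable line_eq.
by rewrite /derive line_eq.
Qed.

Lemma is_derive_ext {V W : normedModType R} {f g : V -> W} {x v : V} {d d' : W} :
  is_derive x v f d -> f = g -> d = d' -> is_derive x v g d'.
Proof. by move=> H e1 e2; rewrite -e1 -e2. Qed.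

Lemma is_derive_affine (b g t : R) :
  is_derive t 1 (fun s : R => b + s * g) g.
Proof.
have H : is_derive t 1 (cst b + g *: (@id R)) (0 + g *: 1).
  exact: is_deriveD.
apply: (is_derive_ext H).
- by apply: funext => s /=; rewrite mulrC.
- by rewrite add0r [g *: 1]mulr1.
Qed.

Lemma is_derive_sumexp n (al be ga : 'I_n -> R) (t : R) :
  is_derive t 1 (fun s : R => \sum_(k < n) al k * expR (be k + s * ga k))
    (\sum_(k < n) al k * (ga k * expR (be k + t * ga k))).
Proof.
have -> : (fun s : R => \sum_(k < n) al k * expR (be k + s * ga k)) =
   \sum_(k < n) (fun s : R => al k * expR (be k + s * ga k)).
  by apply: funext => s; rewrite fct_sumE.
apply: is_derive_sum => k.
have H2 := @is_derive1_comp R expR (fun s => be k + s * ga k) t _ _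
   (is_derive_expR _) (is_derive_affine (be k) (ga k) t).
have H3 := is_deriveZ (al k) H2.
apply: (is_derive_ext H3).
- by apply: funext.
- by rewrite mulrC.
Qed.

Definition cov {n} (s v g : 'I_n -> R) :=
  \sum_(k < n) s k * v k * g k - (\sum_(k < n) s k * v k) * (\sum_(k < n) s k * g k).

Lemma is_derive_ln_comp (F : R -> R) t dF : 0 < F t -> is_derive t 1 F dF ->
  is_derive t 1 (fun s => ln (F s)) ((F t)^-1 * dF).
Proof.
move=> Fp HF.
have H := @is_derive1_comp R (@ln R) F t _ _ (is_derive1_ln Fp) HF.
exact: (is_derive_ext H).
Qed.

Lemma sumexp_gt0 n (b : 'I_n -> R) : (0 < n)%N -> 0 < \sum_(k < n) expR (b k).
Proof.
move=> n0; rewrite (bigD1 (Ordinal n0)) //=.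
apply: ltr_pwDl; first exact: expR_gt0.
by apply: sumr_ge0 => k _; exact: expR_ge0.
Qed.
Lemma softmax_mvt n (b g v : 'I_n -> R) : (0 < n)%N ->
  exists t : R,
  (\sum_(k < n) v k * expR (b k + g k)) / (\sum_(k < n) expR (b k + g k))
  - (\sum_(k < n) v k * expR (b k)) / (\sum_(k < n) expR (b k))
  = cov (fun k => expR (b k + t * g k) / \sum_(l < n) expR (b l + t * g l)) v g.
Proof.
move=> n0.
pose Nf := fun s : R => \sum_(k < n) v k * expR (b k + s * g k).
pose Df := fun s : R => \sum_(k < n) (fun _ => 1) k * expR (b k + s * g k).
have Dp s : 0 < Df s.
  have -> : Df s = \sum_(k < n) expR (b k + s * g k).
    by apply: eq_bigr => k _; rewrite mul1r.
  exact: sumexp_gt0.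
pose dNf := fun s : R => \sum_(k < n) v k * (g k * expR (b k + s * g k)).
pose dDf := fun s : R => \sum_(k < n) (fun _ => 1) k * (g k * expR (b k + s * g k)).
pose h := fun s : R => Nf s * (Df s)^-1.
pose dh := fun s => Nf s *: (- (Df s) ^- 2 *: dDf s) + (Df s)^-1 *: dNf s.
have hd (s : R) : is_derive s 1 h (dh s).
  have HN : is_derive s 1 Nf (dNf s) := is_derive_sumexp n v b g s.
  have HD : is_derive s 1 Df (dDf s) := is_derive_sumexp n (fun _ => 1) b g s.
  have HV := is_deriveV (lt0r_neq0 (Dp s)) HD.
  exact: (is_derive_ext (is_deriveM HN HV)).
have hc : {within `[0, 1], continuous h}.
  apply/continuous_subspaceT => r.
  apply/differentiable_continuous/derivable1_diffP.
  by case: (hd r).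
have [t _ Ht] := MVT_segment ler01 (fun x _ => hd x) hc.
exists t.
have e1 : h 1 = (\sum_(k < n) v k * expR (b k + g k)) / (\sum_(k < n) expR (b k + g k)).
  rewrite /h /Nf /Df; congr (_ * _^-1); apply: eq_bigr => k _; by rewrite mul1r ?mul1r.
have e0 : h 0 = (\sum_(k < n) v k * expR (b k)) / (\sum_(k < n) expR (b k)).
  rewrite /h /Nf /Df; congr (_ * _^-1); apply: eq_bigr => k _; by rewrite mul0r addr0 ?mul1r.
rewrite -e1 -e0 Ht subr0 mulr1 /dh /cov.
set S := \sum_(l < n) expR (b l + t * g l).
have hS : Df t = S by apply: eq_bigr => k _; rewrite mul1r.
have S0 : S != 0 by rewrite -hS; exact: lt0r_neq0.
have r1 : \sum_(k < n) expR (b k + t * g k) / S * v k * g k = dNf t / S.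
  by rewrite /dNf mulr_suml; apply: eq_bigr => k _; ring.
have r2 : \sum_(k < n) expR (b k + t * g k) / S * v k = Nf t / S.
  by rewrite /Nf mulr_suml; apply: eq_bigr => k _; ring.
have r3 : \sum_(k < n) expR (b k + t * g k) / S * g k = dDf t / S.
  by rewrite /dDf mulr_suml; apply: eq_bigr => k _; ring.
rewrite r1 r2 r3 hS.
rewrite /GRing.scale /=.
by field.
Qed.
Lemma cov_shift n (s v g : 'I_n -> R) :
  cov s v g = \sum_(k < n) s k * (v k - \sum_(l < n) s l * v l) * g k.
Proof.
rewrite /cov mulr_sumr -sumrB; apply: eq_bigr => k _; ring.
Qed.

Lemma s_le1 n (s : 'I_n -> R) k : (forall k, 0 <= s k) -> \sum_(l < n) s l = 1 -> s k <= 1.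
Proof.
move=> s0 s1; rewrite -s1 (bigD1 k) //= lerDl.
by apply: sumr_ge0 => l _.
Qed.

Lemma cov_inf n (s v g : 'I_n -> R) (G : R) :
  (forall k, 0 <= s k) -> \sum_(k < n) s k = 1 ->
  (forall k, `|v k| <= 1) -> (forall k, `|g k| <= G) ->
  `|cov s v g| <= 2 * G.
Proof.
move=> s0 s1 v1 gG.
set m := \sum_(l < n) s l * v l.
have m1 : `|m| <= 1.
  apply: (le_trans (ler_norm_sum _ _ _)).
  rewrite -s1; apply: ler_sum => k _; rewrite normrM ger0_norm //.
  by rewrite -[leRHS]mulr1 ler_wpM2l.
have -> : 2 * G = \sum_(k < n) s k * (2 * G) by rewrite -mulr_suml s1 mul1r.
rewrite cov_shift -/m.
apply: (le_trans (ler_norm_sum _ _ _)); apply: ler_sum => k _.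
rewrite !normrM ger0_norm //.
have h1 : `|v k - m| <= 2.
  by apply: (le_trans (ler_normB _ _)); have := v1 k; lra.
have h2 := gG k; have h3 := s0 k.
rewrite -mulrA; apply: ler_wpM2l => //.
by apply: ler_pM.
Qed.
Lemma amgm_abs (G Gi a b : R) : 0 < G -> G * Gi = 1 -> 0 <= Gi ->
  2 * (`|a| * `|b|) <= G * a ^+ 2 + Gi * b ^+ 2.
Proof.
move=> Gp hinv Gi0.
have E : Gi * (G * `|a| - `|b|) ^+ 2
   = (G * Gi) * (G * `|a| ^+ 2) - 2 * (G * Gi) * (`|a| * `|b|) + Gi * `|b| ^+ 2.
  by ring.
rewrite hinv !mul1r !real_normK ?num_real // in E.
have : 0 <= Gi * (G * `|a| - `|b|) ^+ 2 by apply: mulr_ge0 => //; exact: sqr_ge0.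
rewrite E; lra.
Qed.

Lemma cov_l2 n (s v g : 'I_n -> R) :
  (forall k, 0 <= s k) -> \sum_(k < n) s k = 1 ->
  \sum_(k < n) v k ^+ 2 <= 1 ->
  `|cov s v g| <= Num.sqrt (\sum_(k < n) g k ^+ 2).
Proof.
move=> s0 s1 v1.
set G2 := \sum_(k < n) g k ^+ 2.
have G20 : 0 <= G2 by apply: sumr_ge0 => k _; exact: sqr_ge0.
set G := Num.sqrt G2.
have Gge : 0 <= G by exact: sqrtr_ge0.
case: (eqVneq G 0) => [G0|Gn0].
  have : G2 = 0 by apply/eqP; rewrite eq_le G20 andbT -sqrtr_eq0 -/G -G0.
  move/psumr_eq0P => gk0.
  have gk k : g k = 0 by apply/eqP; rewrite -sqrf_eq0; apply/eqP; apply: gk0 => // l _; exact: sqr_ge0.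
  rewrite cov_shift big1 ?normr0 // => k _; by rewrite gk mulr0.
have Gp : 0 < G by rewrite lt_def Gn0 Gge.
set Gi := G^-1.
have hinv : G * Gi = 1 by rewrite /Gi divff // gt_eqF.
have Gi0 : 0 <= Gi by rewrite /Gi invr_ge0 ltW.
set m := \sum_(l < n) s l * v l.
have var1 : \sum_(k < n) s k * (v k - m) ^+ 2 <= 1.
  have -> : \sum_(k < n) s k * (v k - m) ^+ 2 = \sum_(k < n) s k * v k ^+ 2 - m ^+ 2.
    have -> : \sum_(k < n) s k * (v k - m) ^+ 2 =
       \sum_(k < n) (s k * v k ^+ 2 - 2 * m * (s k * v k) + m ^+ 2 * s k).
      by apply: eq_bigr => k _; ring.
    rewrite !big_split /= sumrN -!mulr_sumr -/m s1; ring.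
  have : \sum_(k < n) s k * v k ^+ 2 <= 1.
    apply: le_trans v1; apply: ler_sum => k _.
    rewrite -[leRHS]mul1r; apply: ler_wpM2r; first exact: sqr_ge0.
    exact: s_le1.
  have := sqr_ge0 m; lra.
have sg : \sum_(k < n) s k * g k ^+ 2 <= G2.
  apply: ler_sum => k _.
  rewrite -[leRHS]mul1r; apply: ler_wpM2r; first exact: sqr_ge0.
  exact: s_le1.
have G2E : G2 = G * G by rewrite -expr2 sqr_sqrtr.
rewrite cov_shift -/m.
apply: (le_trans (ler_norm_sum _ _ _)).
apply: (@le_trans _ _ (\sum_(k < n) s k * (G * (v k - m) ^+ 2 + Gi * g k ^+ 2) / 2)).
  apply: ler_sum => k _.
  rewrite !normrM ger0_norm // -mulrA -mulrA; apply: ler_wpM2l => //.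
  have := @amgm_abs G Gi (v k - m) (g k) Gp hinv Gi0; lra.
rewrite -mulr_suml.
have -> : \sum_(k < n) s k * (G * (v k - m) ^+ 2 + Gi * g k ^+ 2) =
   G * \sum_(k < n) s k * (v k - m) ^+ 2 + Gi * \sum_(k < n) s k * g k ^+ 2.
  rewrite !mulr_sumr -big_split /=; apply: eq_bigr => k _; ring.
have h1 : G * \sum_(k < n) s k * (v k - m) ^+ 2 <= G by rewrite -[leRHS]mulr1 ler_wpM2l // ltW.
have h2 : Gi * \sum_(k < n) s k * g k ^+ 2 <= Gi * G2 by rewrite ler_wpM2l.
have h3 : Gi * G2 = G by rewrite G2E mulrA [Gi * G]mulrC hinv mul1r.
lra.
Qed.
Lemma expR_conv (a b t : R) : 0 <= t -> t <= 1 ->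
  expR (t * a + (1 - t) * b) <= t * expR a + (1 - t) * expR b.
Proof.
move=> t0 t1.
set m := t * a + (1 - t) * b.
have ha : expR m * (1 + (a - m)) <= expR a.
  have -> : expR a = expR m * expR (a - m) by rewrite -expRD; congr expR; ring.
  by rewrite ler_wpM2l ?expR_ge0 // expR_ge1Dx.
have hb : expR m * (1 + (b - m)) <= expR b.
  have -> : expR b = expR m * expR (b - m) by rewrite -expRD; congr expR; ring.
  by rewrite ler_wpM2l ?expR_ge0 // expR_ge1Dx.
have h1 : 0 <= t * (expR a - expR m * (1 + (a - m))) by apply: mulr_ge0; rewrite ?subr_ge0.
have h2 : 0 <= (1 - t) * (expR b - expR m * (1 + (b - m))) by apply: mulr_ge0; rewrite ?subr_ge0.
have key : t * (expR m * (1 + (a - m))) + (1 - t) * (expR m * (1 + (b - m))) = expR m.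
  by rewrite /m; ring.
lra.
Qed.

Lemma lse_convex n (a b : 'I_n -> R) (t : R) : (0 < n)%N -> 0 <= t -> t <= 1 ->
  ln (\sum_(k < n) expR (t * a k + (1 - t) * b k))
  <= t * ln (\sum_(k < n) expR (a k)) + (1 - t) * ln (\sum_(k < n) expR (b k)).
Proof.
move=> n0 t0 t1.
set SA := \sum_(k < n) expR (a k); set SB := \sum_(k < n) expR (b k).
have SAp : 0 < SA by exact: sumexp_gt0.
have SBp : 0 < SB by exact: sumexp_gt0.
set K := expR (t * ln SA + (1 - t) * ln SB).
rewrite -[leRHS]expRK -/K ler_ln ?posrE ?expR_gt0 //; last first.
  exact: sumexp_gt0.
apply: (@le_trans _ _ (\sum_(k < n) K * (t * (expR (a k) / SA) + (1 - t) * (expR (b k) / SB)))).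
  apply: ler_sum => k _.
  have -> : t * a k + (1 - t) * b k = (t * ln SA + (1 - t) * ln SB)
      + (t * (a k - ln SA) + (1 - t) * (b k - ln SB)) by ring.
  rewrite expRD -/K ler_wpM2l ?expR_ge0 //.
  have ea : expR (a k) / SA = expR (a k - ln SA) by rewrite expRB lnK ?posrE.
  have eb : expR (b k) / SB = expR (b k - ln SB) by rewrite expRB lnK ?posrE.
  rewrite ea eb.
  by apply: expR_conv.
rewrite -mulr_sumr big_split /= -!mulr_sumr -!mulr_suml -/SA -/SB.
by rewrite !divff ?gt_eqF // !mulr1 subrKC mulr1.
Qed.
End S.

Lemma is_derive_shape (R : realType) (c K a e : R) (F : R -> R) t dF :
  0 < F t -> is_derive t 1 F dF ->
  is_derive t 1 (fun s => c * (K - s * a + e * ln (F s))) (c * (- a + e * ((F t)^-1 * dF))).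
Proof.
move=> Fp HF.
have H1 := is_derive_affine K (- a) t.
have H2 := is_deriveZ e (@is_derive_ln_comp R F t dF Fp HF).
have H3 := is_deriveZ c (is_deriveD H1 H2).
apply: (is_derive_ext H3).
  apply: funext => s /=.
  change (c * ((K + s * - a) + e * ln (F s)) = c * (K - s * a + e * ln (F s))); ring.
by rewrite /GRing.scale /=; ring.
Qed.

Definition w {R : realType} {n} (C : 'M[R]_n) (eta : R) i (x : 'rV[R]_n) k :=
  (x 0 k - C i k - eta) / eta.

Lemma phi_line {R : realType} {n : nat} (eta : R) (C : 'M[R]_n) (q p : 'rV[R]_n) (i : 'I_n) x j :
  eta != 0 ->
  (fun t : R => phi eta C q p i (t *: delta_mx 0 j + x)) =
  fun t => n%:R * p 0 i * ((- dotv q x - eta * ln (p 0 i) + eta) - t * q 0 j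
     + eta * ln (\sum_(k < n) 1 * expR (w C eta i x k + t * ((k == j)%:R / eta)))).
Proof.
move=> e0; apply: funext => t; rewrite /phi.
have Ed : dotv q (t *: delta_mx 0 j + x) = dotv q x + t * q 0 j.
  rewrite /dotv (bigD1 j) //= [in RHS](bigD1 j) //= !mxE eqxx /=.
  have -> : \sum_(k < n | k != j) q 0 k * (t *: delta_mx 0 j + x) 0 k
      = \sum_(k < n | k != j) q 0 k * x 0 k.
    apply: eq_bigr => k kj; rewrite !mxE (negbTE kj) /=; congr (_ * _).
    by rewrite mulr0 add0r.
  rewrite eqxx mulr1; ring.
have Ee : \sum_(j0 < n) expR (((t *: delta_mx 0 j + x) 0 j0 - C i j0 - eta) / eta)
   = \sum_(k < n) 1 * expR (w C eta i x k + t * ((k == j)%:R / eta)).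
  apply: eq_bigr => k _; rewrite mul1r !mxE /w /=; congr expR.
  by field.
rewrite Ed Ee; ring.
Qed.

Lemma grad_phi {R : realType} {n : nat} (eta : R) (C : 'M[R]_n) (q p : 'rV[R]_n) (i : 'I_n) x :
  0 < eta -> (0 < n)%N ->
  grad (phi eta C q p i) x = \row_j (n%:R * p 0 i *
      (- q 0 j + expR (w C eta i x j) / \sum_(k < n) expR (w C eta i x k))).
Proof.
move=> e0 n0; apply/rowP => j; rewrite !mxE.
pose F := fun t : R => \sum_(k < n) 1 * expR (w C eta i x k + t * ((k == j)%:R / eta)).
have HF := is_derive_sumexp n (fun _ => 1) (w C eta i x) (fun k => (k == j)%:R / eta) 0.
have F0 : F 0 = \sum_(k < n) expR (w C eta i x k).
  by apply: eq_bigr => k _; rewrite mul0r addr0 mul1r.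
have Fp : 0 < F 0 by rewrite F0; exact: sumexp_gt0.
have H := @is_derive_shape R (n%:R * p 0 i) (- dotv q x - eta * ln (p 0 i) + eta) (q 0 j) eta F 0 _ Fp HF.
have H2 : is_derive (0 : R) 1 (fun t : R => phi eta C q p i (t *: delta_mx 0 j + x))
   (n%:R * p 0 i * (- q 0 j + eta * ((F 0)^-1 *
     (\sum_(k < n) 1 * ((k == j)%:R / eta * expR (w C eta i x k + 0 * ((k == j)%:R / eta))))))).
  by rewrite phi_line ?gt_eqF //; exact: H.
have H3 := is_derive_line n (phi eta C q p i) x (delta_mx 0 j) _ H2.
have Hd : \sum_(k < n) 1 * ((k == j)%:R / eta * expR (w C eta i x k + 0 * ((k == j)%:R / eta)))
    = expR (w C eta i x j) / eta.
  rewrite (bigD1 j) //= big1 ?addr0; last first.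
    by move=> k kj; rewrite (negbTE kj) mul0r mul0r mulr0.
  by rewrite eqxx mul0r addr0 mul1r mul1r mulrC.
rewrite derive_val F0 Hd; congr (_ * (_ + _)).
field; apply/andP; split; rewrite gt_eqF //; exact: sumexp_gt0.
Qed.

Lemma softw_ge0 {R : realType} {n : nat} (b g : 'I_n -> R) (t : R) k :
  0 <= expR (b k + t * g k) / \sum_(l < n) expR (b l + t * g l).
Proof. by apply: divr_ge0; [exact: expR_ge0| apply: sumr_ge0 => l _; exact: expR_ge0]. Qed.

Lemma softw_sum1 {R : realType} {n : nat} (b g : 'I_n -> R) (t : R) : (0 < n)%N ->
  \sum_(k < n) expR (b k + t * g k) / \sum_(l < n) expR (b l + t * g l) = 1.
Proof.
move=> n0; rewrite -mulr_suml divff // gt_eqF //.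
exact: (sumexp_gt0 n (fun l => b l + t * g l) n0).
Qed.

Lemma dot_grad {R : realType} {n : nat} (eta : R) (C : 'M[R]_n) (q p : 'rV[R]_n) (i : 'I_n) x y v :
  0 < eta -> (0 < n)%N ->
  exists t : R, dotv (grad (phi eta C q p i) x - grad (phi eta C q p i) y) v =
   n%:R * p 0 i * cov (fun k => expR (w C eta i y k + t * ((x 0 k - y 0 k) / eta))
        / \sum_(l < n) expR (w C eta i y l + t * ((x 0 l - y 0 l) / eta)))
      (fun k => v 0 k) (fun k => (x 0 k - y 0 k) / eta).
Proof.
move=> e0 n0.
have [t Ht] := softmax_mvt n (w C eta i y) (fun k => (x 0 k - y 0 k) / eta) (fun k => v 0 k) n0.
exists t; rewrite -Ht.
have ew k : w C eta i y k + (x 0 k - y 0 k) / eta = w C eta i x k.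
  by rewrite /w; field; rewrite gt_eqF.
under eq_bigr do rewrite ew.
under [X in _ / X]eq_bigr do rewrite ew.
rewrite /dotv !grad_phi //.
rewrite !mulr_suml -sumrB mulr_sumr; apply: eq_bigr => k _.
rewrite !mxE; ring.
Qed.

Lemma norm2_sq1 {R : realType} {n : nat} (v : 'rV[R]_n) : norm2 v <= 1 -> \sum_(k < n) v 0 k ^+ 2 <= 1.
Proof.
rewrite /norm2 => h.
have S0 : 0 <= \sum_(k < n) v 0 k ^+ 2 by apply: sumr_ge0 => k _; exact: sqr_ge0.
rewrite -(sqr_sqrtr S0).
have := sqrtr_ge0 (\sum_(k < n) v 0 k ^+ 2).
move: h; set a := Num.sqrt _ => h1 h2; nra.
Qed.

Lemma norm2_0 {R : realType} {n : nat} : norm2 (0 : 'rV[R]_n) <= 1.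
Proof.
rewrite /norm2 big1 ?sqrtr0 ?ler01 // => k _; by rewrite mxE expr2 mulr0.
Qed.

Lemma norm2_scale {R : realType} {n : nat} (eta : R) (d : 'rV[R]_n) : 0 < eta ->
  Num.sqrt (\sum_(k < n) (d 0 k / eta) ^+ 2) = norm2 d / eta.
Proof.
move=> e0.
have S0 : 0 <= \sum_(k < n) d 0 k ^+ 2 by apply: sumr_ge0 => k _; exact: sqr_ge0.
have -> : \sum_(k < n) (d 0 k / eta) ^+ 2 = (norm2 d / eta) ^+ 2.
  rewrite expr_div_n /norm2 sqr_sqrtr // mulr_suml; apply: eq_bigr => k _.
  by rewrite expr_div_n.
rewrite sqrtr_sqr ger0_norm //; apply: divr_ge0; [exact: sqrtr_ge0 | exact: ltW].
Qed.

Lemma l2_bound {R : realType} {n : nat} (eta : R) (C : 'M[R]_n) (q p : 'rV[R]_n) (i : 'I_n) x y :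
  0 < eta -> (0 < n)%N -> 0 <= p 0 i ->
  dual_norm (@norm2 R n) (grad (phi eta C q p i) x - grad (phi eta C q p i) y)
   <= n%:R * p 0 i / eta * norm2 (x - y).
Proof.
move=> e0 n0 p0.
apply: ge_sup.
  by exists (dotv (grad (phi eta C q p i) x - grad (phi eta C q p i) y) 0); exists 0 => //; exact: norm2_0.
move=> z [v hv <-].
have [t ->] := dot_grad eta C q p i x y v e0 n0.
have c0 : 0 <= n%:R * p 0 i by apply: mulr_ge0 => //; exact: ler0n.
set s := (fun k => _).
have := cov_l2 n s (fun k => v 0 k) (fun k => (x 0 k - y 0 k) / eta) (fun k => softw_ge0 _ _ t k)
   (softw_sum1 _ _ t n0) (norm2_sq1 v hv).
have -> : \sum_(k < n) ((x 0 k - y 0 k) / eta) ^+ 2 = \sum_(k < n) ((x - y) 0 k / eta) ^+ 2.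
  by apply: eq_bigr => k _; rewrite !mxE.
rewrite norm2_scale // => hc.
apply: (le_trans (ler_wpM2l c0 (ler_norm _))).
apply: (le_trans (ler_wpM2l c0 hc)).
by rewrite mulrA mulrAC.
Qed.

Lemma norminf_ge {R : realType} {n : nat} (v : 'rV[R]_n) k : `|v 0 k| <= norminf v.
Proof. rewrite /norminf; exact: (le_bigmax _ (fun k => `|v 0 k|) k). Qed.

Lemma norminf_ge0 {R : realType} {n : nat} (v : 'rV[R]_n) : 0 <= norminf v.
Proof. rewrite /norminf; exact: bigmax_ge_id. Qed.

Lemma norminf_0 {R : realType} {n : nat} : norminf (0 : 'rV[R]_n) <= 1.
Proof.
rewrite /norminf; apply: bigmax_le => //.
by move=> k _; rewrite mxE normr0 ler01.
Qed.

Lemma inf_bound {R : realType} {n : nat} (eta : R) (C : 'M[R]_n) (q p : 'rV[R]_n) (i : 'I_n) x y :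
  0 < eta -> (0 < n)%N -> 0 <= p 0 i ->
  dual_norm (@norminf R n) (grad (phi eta C q p i) x - grad (phi eta C q p i) y)
   <= 5 * n%:R * p 0 i / eta * norminf (x - y).
Proof.
move=> e0 n0 p0.
apply: ge_sup.
  by exists (dotv (grad (phi eta C q p i) x - grad (phi eta C q p i) y) 0); exists 0 => //; exact: norminf_0.
move=> z [v hv <-].
have [t ->] := dot_grad eta C q p i x y v e0 n0.
have c0 : 0 <= n%:R * p 0 i by apply: mulr_ge0 => //; exact: ler0n.
set s := (fun k => _).
have vk k : `|v 0 k| <= 1 by apply: le_trans (norminf_ge v k) hv.
have gk k : `|(x 0 k - y 0 k) / eta| <= norminf (x - y) / eta.
  rewrite normrM normfV (gtr0_norm e0); apply: ler_wpM2r; first by rewrite invr_ge0 ltW.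
  by have := norminf_ge (x - y) k; rewrite !mxE.
have hc := cov_inf n s (fun k => v 0 k) (fun k => (x 0 k - y 0 k) / eta) (norminf (x - y) / eta)
   (fun k => softw_ge0 _ _ t k) (softw_sum1 _ _ t n0) vk gk.
apply: (le_trans (ler_wpM2l c0 (ler_norm _))).
apply: (le_trans (ler_wpM2l c0 hc)).
have N0 := norminf_ge0 (x - y).
have Ne : 0 <= norminf (x - y) / eta by apply: divr_ge0 => //; exact: ltW.
have -> : 5 * n%:R * p 0 i / eta * norminf (x - y) = n%:R * p 0 i * (5 * (norminf (x - y) / eta)).
  by rewrite mulrA; ring.
apply: ler_wpM2l => //; apply: ler_wpM2r => //.
lra.
Qed.

Lemma phi_convex {R : realType} {n : nat} (eta : R) (C : 'M[R]_n) (q p : 'rV[R]_n) (i : 'I_n) :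
  0 < eta -> (0 < n)%N -> 0 <= p 0 i -> convex_fun (phi eta C q p i).
Proof.
move=> e0 n0 p0 x y t t0 t1.
have c0 : 0 <= n%:R * p 0 i by apply: mulr_ge0 => //; exact: ler0n.
rewrite /phi.
have Ed : dotv q (t *: x + (1 - t) *: y) = t * dotv q x + (1 - t) * dotv q y.
  rewrite /dotv !mulr_sumr -big_split; apply: eq_bigr => k _; rewrite !mxE /=; ring.
have Ee : \sum_(j < n) expR (((t *: x + (1 - t) *: y) 0 j - C i j - eta) / eta)
   = \sum_(k < n) expR (t * w C eta i x k + (1 - t) * w C eta i y k).
  apply: eq_bigr => k _; rewrite !mxE /w; congr expR; by field; rewrite gt_eqF.
have Hl := lse_convex n (w C eta i x) (w C eta i y) t n0 t0 t1.
rewrite Ed Ee.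
move: Hl; rewrite /w.
set Lz := ln _; set Lx := ln _; set Ly := ln _ => Hl.
have h : 0 <= n%:R * p 0 i * eta * (t * Lx + (1 - t) * Ly - Lz).
  by apply: mulr_ge0; [apply: mulr_ge0 => //; exact: ltW | rewrite subr_ge0].
lra.
Qed.

Section Diff.
Context {R : realType} {V : normedModType R}.
Lemma dD (f g : V -> R) x : differentiable f x -> differentiable g x ->
  differentiable (fun y => f y + g y) x.
Proof. exact: differentiableD. Qed.
Lemma dM (f g : V -> R) x : differentiable f x -> differentiable g x ->
  differentiable (fun y => f y * g y) x.
Proof. exact: differentiableM. Qed.
Lemma dN (f : V -> R) x : differentiable f x -> differentiable (fun y => - f y) x.
Proof. exact: differentiableN. Qed.
Lemma dC (a : R) x : differentiable (fun _ : V => a) x.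
Proof. exact: differentiable_cst. Qed.
Lemma dcomp (f : V -> R) (g : R -> R) x : differentiable f x -> differentiable g (f x) ->
  differentiable (fun y => g (f y)) x.
Proof. move=> hf hg; exact: (differentiable_comp hf hg). Qed.
Lemma dsum m (F : 'I_m -> V -> R) x : (forall k, differentiable (F k) x) ->
  differentiable (fun y => \sum_(k < m) F k y) x.
Proof.
move=> h; have := differentiable_sum h.
by have -> : (\sum_(k < m) F k) = (fun y => \sum_(k < m) F k y) by apply: funext => y; rewrite fct_sumE.
Qed.
End Diff.

Lemma phi_diff {R : realType} {n : nat} (eta : R) (C : 'M[R]_n) (q p : 'rV[R]_n) (i : 'I_n) x :
  0 < eta -> (0 < n)%N -> differentiable (phi eta C q p i) x.
Proof.
move=> e0 n0; rewrite /phi.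
apply: dM; first exact: dC.
apply: dD; last exact: dC.
apply: dD; first apply: dD.
- apply: dN; rewrite /dotv; apply: dsum => k.
  apply: dM; first exact: dC.
  exact: differentiable_coord.
- exact: dC.
- apply: dM; first exact: dC.
  apply: dcomp.
    apply: dsum => k; apply: dcomp.
      apply: dM; last exact: dC.
      apply: dD; last exact: dC.
      apply: dD; last exact: dC.
      exact: differentiable_coord.
    by apply/derivable1_diffP; exact: derivable_expR.
  apply/derivable1_diffP.
  have := @is_derive1_ln R (\sum_(j < n) expR ((x 0 j - C i j - eta) / eta)).
  move=> /(_ (sumexp_gt0 n (fun j => (x 0 j - C i j - eta) / eta) n0)) [] //.
Qed.

Theorem lemma1 (R : realType) (n : nat) (eta : R) (C : 'M[R]_n)
    (q p : 'rV[R]_n) :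
  (0 < n)%N -> 0 < eta ->
  (forall i j, 0 <= C i j) ->
  in_simplex q -> in_simplex p ->
  (forall j, 0 < q 0 j) -> (forall j, 0 < p 0 j) ->
  forall i : 'I_n,
    smooth_wrt (@norm2 R n) (n%:R * p 0 i / eta) (phi eta C q p i) /\
    smooth_wrt (@norminf R n) (5 * n%:R * p 0 i / eta) (phi eta C q p i).
Proof.
move=> n0 e0 _ _ _ _ pp i.
have p0 : 0 <= p 0 i := ltW (pp i).
split; split.
- exact: phi_convex.
- by move=> x; exact: phi_diff.
- by move=> x y; exact: l2_bound.
- exact: phi_convex.
- by move=> x; exact: phi_diff.
- by move=> x y; exact: inf_bound.
Qed.
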